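(* Let $\gamma>0$ or $\gamma<-1$, and let $\theta\in\mathbb R^d$. For a dataset $\mathcal D=\{(X_i,Y_i)\}_{i=1}^n\subset\mathbb R^d\times\{0,1\}$ define $$S_\gamma(\theta;\mathcal D)=\frac1n\sum_{i=1}^n\Big[\frac{\exp\{(\gamma+1)Y_i\theta^\top X_i\}}{1+\exp\{(\gamma+1)\theta^\top X_i\}}\Big]^{\frac{\gamma}{\gamma+1}}\Big\{Y_i-\frac{\exp\{(\gamma+1)\theta^\top X_i\}}{1+\exp\{(\gamma+1)\theta^\top X_i\}}\Big\}X_i.$$ Then $\sup_{\mathcal D}|\theta^\top S_\gamma(\theta;\mathcal D)|<\infty$, where the supremum is over all $n\ge1$ and all datasets $\mathcal D$.
   Context: $S_\gamma(\theta;\mathcal D)$ is the $\gamma$-estimating function (with the counting measure on $\{0,1\}$ as reference measure) for the binary logistic model $p(y|x,\theta)=\exp(y\theta^\top x)/(1+\exp(\theta^\top x))$. *)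

(* Defs.v *)
From HB Require Import structures.
From mathcomp Require Import all_boot all_order all_algebra.
From mathcomp Require Import all_classical all_reals all_analysis.
Set Implicit Arguments. Unset Strict Implicit. Unset Printing Implicit Defensive.
Import Order.TTheory GRing.Theory Num.Theory.
Local Open Scope ring_scope.

Definition dotv (R : realType) (d : nat) (u v : 'rV[R]_d) : R :=
  \sum_(j < d) u 0 j * v 0 j.

Definition S_gamma (R : realType) (d n : nat) (gamma : R) (theta : 'rV[R]_d)
  (X : 'I_n -> 'rV[R]_d) (Y : 'I_n -> bool) : 'rV[R]_d :=
  (n%:R)^-1 *: \sum_(i < n)
    (( (expR ((gamma + 1) * (Y i)%:R * dotv theta (X i))
         / (1 + expR ((gamma + 1) * dotv theta (X i)))) `^ (gamma / (gamma + 1)))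
     * ((Y i)%:R - expR ((gamma + 1) * dotv theta (X i))
                   / (1 + expR ((gamma + 1) * dotv theta (X i)))))
    *: X i.

(* Main.v *)
Require Import Defs.
From HB Require Import structures.
From mathcomp Require Import all_boot all_order all_algebra.
From mathcomp Require Import all_classical all_reals all_analysis.
From mathcomp Require Import ring lra.
Import Order.TTheory GRing.Theory Num.Theory.
Local Open Scope ring_scope.

Section Aux.
Variable R : realType.

Lemma keyK (v b : R) : 0 < b ->
  `|(expR v / (1 + expR v)) `^ b * (1 - expR v / (1 + expR v)) * v| <= 1 + b^-1.
Proof.
move=> hb.
have e0 := expR_gt0 v.
have d0 : 0 < 1 + expR v by rewrite ltr_wpDl.
have s0 : 0 < expR v / (1 + expR v) by rewrite divr_gt0.
have s1 : expR v / (1 + expR v) <= 1 by rewrite ler_pdivrMr // mul1r lerDr.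
have se : expR v / (1 + expR v) <= expR v by rewrite ler_pdivrMr // ler_peMr ?lerDl // ltW.
have oms : 1 - expR v / (1 + expR v) = (1 + expR v)^-1.
  by field; rewrite lt0r_neq0.
rewrite oms /powR gt_eqF //.
have lnle0 : ln (expR v / (1 + expR v)) <= 0 by apply: ln_le0.
have lnlev : ln (expR v / (1 + expR v)) <= v.
  by rewrite -[X in _ <= X](expRK v) ler_ln // posrE.
have i0 : 0 < (1 + expR v)^-1 by rewrite invr_gt0.
have i1 : (1 + expR v)^-1 <= 1 by rewrite invr_le1 // ?lerDl // unitfE lt0r_neq0.
have w0 : 0 < expR (b * ln (expR v / (1 + expR v))) by apply: expR_gt0.
have hb1 : 0 <= b^-1 by rewrite invr_ge0 ltW.
case: (lerP 0 v) => hv.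
- have w1 : expR (b * ln (expR v / (1 + expR v))) <= 1.
    by rewrite -[X in _ <= X]expR0 ler_expR mulr_ge0_le0 // ltW.
  rewrite ger0_norm; last by rewrite !mulr_ge0 // ltW.
  have : (1 + expR v)^-1 * v <= 1.
    rewrite mulrC ler_pdivrMr // mul1r.
    have := expR_ge1Dx v; lra.
  move=> h.
  apply: (le_trans _ (_ : 1 <= _)); last by rewrite lerDl.
  rewrite -mulrA.
  apply: (le_trans (ler_wpM2r _ w1)); first by rewrite mulr_ge0 // ltW.
  by rewrite mul1r.
- have w1 : expR (b * ln (expR v / (1 + expR v))) <= expR (b * v).
    by rewrite ler_expR ler_pM2l.
  rewrite normrM ger0_norm; last by rewrite !mulr_ge0 // ltW.
  rewrite ltr0_norm //.
  apply: (le_trans _ (_ : b^-1 <= _)); last by rewrite lerDr.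
  have h1 : expR (b * ln (expR v / (1 + expR v))) * (1 + expR v)^-1 <= expR (b * v).
    apply: (le_trans _ w1); rewrite ler_piMr // ltW //.
  apply: (le_trans (ler_wpM2r _ h1)); first by rewrite oppr_ge0 ltW.
  (* expR (b v) * (-v) <= 1/b *)
  have := expR_ge1Dx (- (b * v)).
  rewrite expRN => h2.
  have eb := expR_gt0 (b * v).
  rewrite -(ler_pM2l hb) mulrV ?unitfE ?lt0r_neq0 //.
  have h3 : 1 + - (b * v) <= (expR (b * v))^-1 := h2.
  rewrite -(ler_pM2r eb) mulVf ?lt0r_neq0 // in h3.
  have : (1 + - (b * v)) * expR (b * v) <= 1 := h3.
  have : 0 <= expR (b * v) by apply: ltW.
  nra.
Qed.

Lemma termK (a b t : R) (y : bool) : a != 0 -> 0 < b ->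
  `| (expR (a * y%:R * t) / (1 + expR (a * t))) `^ b
     * (y%:R - expR (a * t) / (1 + expR (a * t))) * t| <= (1 + b^-1) / `|a|.
Proof.
move=> ha hb.
have ht : forall Q : R, `|Q * t| = `|Q * (a * t)| / `|a|.
  by move=> Q; rewrite mulrCA normrM (normrM a) mulrAC mulfV ?mul1r ?normrM // normr_eq0.
rewrite ht ler_pM2r ?invr_gt0 ?normr_gt0 //.
case: y => /=.
- rewrite mulr1; exact: keyK.
- rewrite mulr0 mul0r expR0 sub0r.
  set u := a * t.
  have h := expR_gt0 u.
  have e1 : 1 / (1 + expR u) = expR (- u) / (1 + expR (- u)).
    by rewrite expRN; field; rewrite lt0r_neq0 // lt0r_neq0 // ltr_wpDr // ltW.
  have e2 : - (expR u / (1 + expR u)) = - (1 - expR (- u) / (1 + expR (- u))).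
    rewrite -e1; congr (- _); field; rewrite lt0r_neq0 // ltr_wpDl // ltW.
  rewrite e1 e2 mulrN mulNr normrN -normrN -mulrN.
  exact: keyK.
Qed.

End Aux.

Lemma dotvZ (R : realType) (d : nat) (th v : 'rV[R]_d) (c : R) :
  dotv th (c *: v) = c * dotv th v.
Proof. by rewrite /dotv mulr_sumr; apply: eq_bigr => j _; rewrite mxE mulrCA. Qed.

Lemma dotvS (R : realType) (d n : nat) (th : 'rV[R]_d) (F : 'I_n -> 'rV[R]_d) :
  dotv th (\sum_(i < n) F i) = \sum_(i < n) dotv th (F i).
Proof.
rewrite /dotv; under eq_bigr do rewrite summxE mulr_sumr.
by rewrite exchange_big.
Qed.

Theorem mainTheorem8 (R : realType) (d : nat) (gamma : R)
  (hgamma : (0 < gamma) \/ (gamma < -1)) (theta : 'rV[R]_d) :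
  exists M : R, forall (n : nat) (X : 'I_n -> 'rV[R]_d) (Y : 'I_n -> bool),
    (1 <= n)%N -> `| dotv theta (S_gamma gamma theta X Y) | <= M.
Proof.
set a := gamma + 1; set b := gamma / (gamma + 1).
have [ha hb] : a != 0 /\ 0 < b.
  rewrite /b /a; case: hgamma => hg.
  - split; first by rewrite lt0r_neq0 //; lra.
    by rewrite divr_gt0 //; lra.
  - split; first by rewrite ltr0_neq0 //; lra.
    by rewrite -divrNN divr_gt0 //; lra.
exists ((1 + b^-1) / `|a|) => n X Y hn.
rewrite /S_gamma dotvZ dotvS.
under eq_bigr do rewrite dotvZ.
have n0 : 0 < n%:R :> R by rewrite ltr0n.
rewrite normrM ger0_norm; last by rewrite invr_ge0 ltW.
have hs : `|\sum_(i < n) (expR ((gamma + 1) * (Y i)%:R * dotv theta (X i)) /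
        (1 + expR ((gamma + 1) * dotv theta (X i)))) `^ (gamma / (gamma + 1)) *
       ((Y i)%:R - expR ((gamma + 1) * dotv theta (X i)) /
        (1 + expR ((gamma + 1) * dotv theta (X i)))) * dotv theta (X i)|
   <= \sum_(i < n) ((1 + b^-1) / `|a|).
  apply: (le_trans (ler_norm_sum _ _ _)); apply: ler_sum => i _.
  exact: termK.
apply: (le_trans (ler_wpM2l _ hs)); first by rewrite invr_ge0 ltW.
by rewrite sumr_const card_ord -[X in _ * X]mulr_natl mulKf ?lt0r_neq0.
Qed.
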